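(* Let $k,t\ge1$ be integers, let $\mathcal L$ be a finite language of relation and/or constant symbols whose maximal relation arity is $r\ge2$, and let $\mathcal M$ be a totally $k$-bounded $\mathcal L$-structure containing an infinite component. Then there are an integer $t'$ with $t\le t'\le tr$ and a substructure $\mathcal M'$ of $\mathcal M$ such that $\mathcal M'$ has infinitely many distinct components of size $t'$.
   Context: An $\mathcal L$-structure $\mathcal M$ is totally $k$-bounded if for every relation symbol $R(x_1,\dots,x_s)$ of $\mathcal L$ and every partition $[s]=I\cup J$ into nonempty sets, for every assignment of the variables $\bar x_I$ in $M$ there are fewer than $k$ assignments of $\bar x_J$ with $\mathcal M\models R(x_1,\dots,x_s)$. Paths and components: a path from $a$ to $b$ is a finite sequence of tuples $\bar a_1,\dots,\bar a_m$ from $M$, each $\bar a_i$ in the interpretation of some relation symbol, consecutive tuples sharing an element, with $a$ in $\bar a_1$ and $b$ in $\bar a_m$; $A\subseteq M$ is connected if any two distinct elements of $A$ are joined by a path using only elements of $A$; a component is a nonempty connected set closed under paths. Substructures contain the interpretations of all constants. *)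

(* Defs.v *)
From Stdlib Require List.
From mathcomp Require Import all_boot.
Set Implicit Arguments. Unset Strict Implicit. Unset Printing Implicit Defensive.

Record language := Language {
  nrel : nat;
  arity : 'I_nrel -> nat;
  ncst : nat }.

Record structure (L : language) := Structure {
  carrier :> Type;
  rel : forall i : 'I_(nrel L), ('I_(arity i) -> carrier) -> Prop;
  cst : 'I_(ncst L) -> carrier }.

Section Defs.
Variables (L : language) (M : structure L).

Definition max_arity (r : nat) : Prop :=
  (exists i : 'I_(nrel L), arity i = r) /\ (forall i : 'I_(nrel L), arity i <= r).

(* Totally k-bounded: for every relation symbol R of arity s, every
   partition [s] = I u J into nonempty sets and every assignment of x_I,
   fewer than k assignments of x_J satisfy R.  An assignment of x_J
   extending f on I is represented by a full tuple agreeing with f on I;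
   two such are distinct iff they differ at some coordinate. *)
Definition totally_bounded (k : nat) : Prop :=
  forall (i : 'I_(nrel L)) (I : {set 'I_(arity i)}),
    I != set0 -> ~: I != set0 ->
    forall (f : 'I_(arity i) -> M) (n : nat) (h : 'I_n -> 'I_(arity i) -> M),
      (forall m, rel (h m)) ->
      (forall m j, j \in I -> h m j = f j) ->
      (forall m1 m2, (forall j, h m1 j = h m2 j) -> m1 = m2) ->
      n < k.

Definition tup := { i : 'I_(nrel L) & 'I_(arity i) -> M }.
Definition occurs (x : M) (u : tup) : Prop := exists j, projT2 u j = x.
Definition good (A : M -> Prop) (u : tup) : Prop :=
  rel (projT2 u) /\ forall j, A (projT2 u j).

Inductive rpath (A : M -> Prop) : M -> M -> Prop :=
| rpath_one (u : tup) (a b : M) :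
    good A u -> occurs a u -> occurs b u -> rpath A a b
| rpath_cons (u : tup) (a c b : M) :
    good A u -> occurs a u -> occurs c u -> rpath A c b -> rpath A a b.

(* A substructure is given by its domain A, which contains all constants;
   its relations are the restrictions, so paths in it are paths using only
   elements of A. *)
Definition substructure (A : M -> Prop) : Prop := forall c, A (cst M c).

Definition component (A C : M -> Prop) : Prop :=
  (forall x, C x -> A x) /\
  (exists x, C x) /\
  (forall a b, C a -> C b -> a <> b -> rpath C a b) /\
  (forall a b, C a -> rpath A a b -> C b).

Definition infinite_set (C : M -> Prop) : Prop :=
  ~ exists l : seq M, forall x, C x -> List.In x l.

Definition has_size (C : M -> Prop) (n : nat) : Prop :=
  exists l : seq M, List.NoDup l /\ List.length l = n /\ (forall x, C x <-> List.In x l).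

Definition inf_many_components_of_size (A : M -> Prop) (n : nat) : Prop :=
  forall N : nat, exists Cs : 'I_N -> M -> Prop,
    (forall m, component A (Cs m) /\ has_size (Cs m) n) /\
    (forall m1 m2, m1 <> m2 -> ~ (forall x, Cs m1 x <-> Cs m2 x)).

End Defs.

(* Main.v *)
Require Import Defs.
From mathcomp Require Import all_boot.
From mathcomp Require Import zify.
From Stdlib Require Import Classical ClassicalEpsilon FunctionalExtensionality.
Set Implicit Arguments. Unset Strict Implicit.

Section S.
Variables (L : language) (M : structure L).

Lemma rpath_mono (A B : M -> Prop) a b :
  (forall x, A x -> B x) -> rpath A a b -> rpath B a b.
Proof.
move=> AB; elim=> [u x y [Hr Hu] ox oy | u x c y [Hr Hu] ox oc _ IH].
- by apply: (rpath_one (u:=u)) => //; split=> // j; apply: AB.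
- by apply: (rpath_cons (u:=u) (c:=c)) => //; split => // j; apply: AB.
Qed.

Lemma rpath_trans (A : M -> Prop) a c b :
  rpath A a c -> rpath A c b -> rpath A a b.
Proof.
elim=> [u x y G ox oy | u x d y G ox od _ IH] H.
- exact: (rpath_cons G ox oy H).
- exact: (rpath_cons G ox od (IH H)).
Qed.

Lemma rpath_sym (A : M -> Prop) a b : rpath A a b -> rpath A b a.
Proof.
elim=> [u x y G ox oy | u x d y G ox od _ IH].
- exact: (rpath_one G oy ox).
- exact: (rpath_trans IH (rpath_one G od ox)).
Qed.

Definition R (A : M -> Prop) a b := a = b \/ rpath A a b.

Lemma R_trans A a c b : R A a c -> R A c b -> R A a b.
Proof.
case=> [->|H1] // [<-|H2]; right => //; exact: rpath_trans H1 H2.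
Qed.

Lemma R_sym A a b : R A a b -> R A b a.
Proof. case=> [->|H]; [left|right] => //; exact: rpath_sym. Qed.

Lemma rpath_in_reach (A : M -> Prop) y a b :
  rpath A a b -> R A y a -> rpath (R A y) a b.
Proof.
move=> H; elim: H => [u x z G ox oz | u x d z G ox od _ IH] Hy.
- have G' : good (R A y) u.
    split; first by case: G.
    move=> j; apply: R_trans Hy _; right; apply: (rpath_one G ox); by exists j.
  exact: (rpath_one G' ox oz).
- have G' : good (R A y) u.
    split; first by case: G.
    move=> j; apply: R_trans Hy _; right; apply: (rpath_one G ox); by exists j.
  have Hd : R A y d by apply: R_trans Hy _; right; apply: (rpath_one G ox od).
  exact: (rpath_cons G' ox od (IH Hd)).
Qed.

Lemma bounded_cover (X : Type) (P : X -> Prop) k :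
  (forall hs, List.NoDup hs -> (forall h, List.In h hs -> P h) -> List.length hs < k) ->
  exists hs, forall h, P h -> List.In h hs.
Proof.
move=> Hb; apply: NNPP => Hn.
have Hex : forall hs, exists h, P h /\ ~ List.In h hs.
  move=> hs; apply: NNPP => H; apply: Hn; exists hs => h Ph; apply: NNPP => Hi; apply: H.
  by exists h; split.
have : forall n, exists hs, List.NoDup hs /\ (forall h, List.In h hs -> P h) /\ List.length hs = n.
  elim=> [|n [hs [nd [Ph len]]]]; first by exists [::]; split; [constructor|split].
  case: (Hex hs) => h [Ph' ni]; exists (h :: hs); split; [by constructor|split]; last by rewrite /= len.
  move=> h' /= [<-|]; [done|exact: Ph].
move=> /(_ k) [hs [nd [Ph len]]]; have := Hb hs nd Ph; by rewrite len ltnn.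
Qed.

Lemma collect (X Y : Type) (xs : list X) (Q : X -> Y -> Prop) :
  (forall i, List.In i xs -> exists l, forall y, Q i y -> List.In y l) ->
  exists l, forall i y, List.In i xs -> Q i y -> List.In y l.
Proof.
elim: xs => [|x xs IH] H; first by exists [::].
case: (H x (or_introl erefl)) => l1 H1.
case: IH => [i Hi|l2 H2]; first exact: H (or_intror Hi).
exists (l1 ++ l2) => i y /= [<-|Hi] Hq; apply List.in_or_app; [left; exact: H1|right; exact: H2 i y Hi Hq].
Qed.

Lemma In_enum (T : finType) (x : T) : List.In x (enum T).
Proof.
have : x \in enum T by rewrite mem_enum.
elim: (enum T) => [|a s IH]; first by rewrite in_nil.
rewrite in_cons => /orP [/eqP ->|H]; [by left|right; exact: IH].
Qed.

Variable (k : nat).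
Hypothesis Htb : totally_bounded M k.

Lemma nbr_pos (i : 'I_(nrel L)) (j : 'I_(arity i)) (x : M) : 1 < arity i ->
  exists hs : list ('I_(arity i) -> M), forall h, Defs.rel h -> h j = x -> List.In h hs.
Proof.
move=> Ha.
have := @bounded_cover _ (fun h : 'I_(arity i) -> M => Defs.rel h /\ h j = x) k.
case=> [hs nd Ph|hs H]; last by exists hs => h r e; apply: H.
have [j' Hj'] : exists j' : 'I_(arity i), j' != j.
  case: (eqVneq (nat_of_ord j) 0) => Hj.
  - by exists (Ordinal Ha); apply/eqP => /(congr1 val) /=; rewrite Hj.
  - by exists (Ordinal (ltnW Ha)); apply/eqP => /(congr1 val) /= E; move: Hj; rewrite -E eqxx.
have HH := (@Htb i [set j] _ _ (fun _ => x) _ (fun m : 'I_(List.length hs) => List.nth m hs (fun _ => x))).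
apply: HH.
- by apply/set0Pn; exists j; rewrite inE.
- by apply/set0Pn; exists j'; rewrite !inE.
- move=> m; have /Ph [] // : List.In (List.nth m hs (fun _ => x)) hs.
  by apply: List.nth_In; apply/ltP.
- move=> m j0; rewrite inE => /eqP ->.
  have /Ph [] // : List.In (List.nth m hs (fun _ => x)) hs.
  by apply: List.nth_In; apply/ltP.
- move=> m1 m2 E; apply: val_inj.
  apply: (proj1 (List.NoDup_nth hs (fun _ => x)) nd); try (apply/ltP; exact: ltn_ord).
  exact: functional_extensionality E.
Qed.

Lemma nbr (x : M) : exists l, forall u : tup M, Defs.rel (projT2 u) -> occurs x u ->
  forall p, List.In (projT2 u p) l.
Proof.
have [i|l Hl] := @collect _ _ (enum 'I_(nrel L)) (fun i y => exists (h : 'I_(arity i) -> M) j p, Defs.rel h /\ h j = x /\ h p = y).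
  move=> _.
  have [j|l Hl] := @collect _ _ (enum 'I_(arity i)) (fun j y => exists (h : 'I_(arity i) -> M) p, Defs.rel h /\ h j = x /\ h p = y).
    move=> _.
    case: (leqP (arity i) 1) => Ha.
    - exists [:: x] => y [h [p [_ [Hj <-]]]]; left.
      have E : p = j by apply: ord_inj; have := ltn_ord p; have := ltn_ord j; lia.
      by rewrite E Hj.
    - have [hs Hhs] := nbr_pos j x Ha.
      exists (List.flat_map (fun h => List.map h (enum 'I_(arity i))) hs) => y [h [p [Hr [Hj <-]]]].
      apply/List.in_flat_map; exists h; split; [exact: Hhs|apply: List.in_map; exact: In_enum].
  exists l => y [h [j [p [Hr [Hj Hp]]]]]; apply: (Hl j) (In_enum j) _; by exists h, p.
exists l => [[i h]] /= Hr [j Hj] p; apply: (Hl i) (In_enum i) _; by exists h, j, p.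
Qed.

Lemma nbl (B : list M) : exists NB, forall b (u : tup M), List.In b B -> Defs.rel (projT2 u) ->
  occurs b u -> forall p, List.In (projT2 u p) NB.
Proof.
have [b _|l Hl] := @collect _ _ B (fun b y => exists u : tup M, Defs.rel (projT2 u) /\ occurs b u /\ exists p, projT2 u p = y).
  have [l Hl] := nbr b; exists l => y [u [Hr [ob [p <-]]]]; exact: Hl.
exists l => b u Hb Hr ob p; apply: Hl Hb _; exists u; split=> //; split => //; by exists p.
Qed.

End S.

Lemma length_size (X : Type) (s : list X) : List.length s = size s.
Proof. by elim: s => //= a s ->. Qed.

Lemma union_ex (X : Type) (l S : list X) : List.NoDup S -> exists S', List.NoDup S' /\
  (forall x, List.In x S' <-> List.In x S \/ List.In x l) /\
  List.length S' <= List.length S + List.length l /\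
  ((exists x, List.In x l /\ List.In x S) -> List.length S' < List.length S + List.length l).
Proof.
elim: l S => [|a l IH] S nd.
  exists S; split=> //; split; first by move=> x; split; [left|case].
  by split; [rewrite addn0|case=> x [[]]].
case: (classic (List.In a S)) => Ha.
- have [S' [nd' [H1 [H2 H3]]]] := IH S nd.
  exists S'; split=> //; split.
    move=> x; rewrite H1 /=; split; [tauto|case; [tauto|case=> [<-|]; tauto]].
  split=> [|_]; rewrite /=; lia.
- have [S' [nd' [H1 [H2 H3]]]] := IH (a :: S) (List.NoDup_cons _ Ha nd).
  exists S'; split=> //; split.
    move=> x; rewrite H1 /=; split; [tauto|tauto].
  split; rewrite /= in H2 *; first lia.
  case=> x [[Ex|Hx] Hs]; first by subst x.
  have : List.length S' < (List.length S).+1 + List.length l by apply: H3; exists x; split=> //; right.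
  lia.
Qed.

Section S2.
Variables (L : language) (M : structure L).

Lemma rpath_ends (A : M -> Prop) a b : rpath A a b -> A a /\ A b.
Proof.
elim=> [u x z [_ G] [j1 <-] [j2 <-] | u x c z [_ G] [j1 <-] _ _ [_ IH]]; done.
Qed.

Lemma exitS (D S : M -> Prop) a b : rpath D a b -> S a -> ~ S b ->
  exists u, good D u /\ (exists j, S (projT2 u j)) /\ (exists j, ~ S (projT2 u j)).
Proof.
elim=> [u x z G [j1 E1] [j2 E2] | u x c z G [j1 E1] [j2 E2] _ IH] Sa nSb.
- by exists u; split=> //; split; [exists j1; rewrite E1|exists j2; rewrite E2].
- case: (classic (S c)) => Sc; first exact: IH Sc nSb.
  by exists u; split=> //; split; [exists j1; rewrite E1|exists j2; rewrite E2].
Qed.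

Lemma exitB (A : M -> Prop) (B NB : list M)
  (HNB : forall b (u : tup M), List.In b B -> Defs.rel (projT2 u) -> occurs b u ->
     forall p, List.In (projT2 u p) NB) a b :
  rpath A a b -> A a -> ~ List.In a B -> List.In b B ->
  exists w, R (fun x => A x /\ ~ List.In x B) a w /\ List.In w NB /\ A w /\ ~ List.In w B.
Proof.
elim=> [u x z G [j1 E1] oz | u x d z G [j1 E1] od _ IH] Ax nBx Bz.
- exists x; split; first by left.
  split=> //; rewrite -E1; exact: (HNB z u Bz (proj1 G) oz j1).
- case: (classic (exists p, List.In (projT2 u p) B)) => [[p Hp]|Hn].
  + exists x; split; first by left.
    split=> //; rewrite -E1; apply: (HNB _ u Hp (proj1 G)); by exists p.
  + have [Ad nBd] : A d /\ ~ List.In d B.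
      case: od => p <-; split; [by case: G => _; apply|by move=> H; apply: Hn; exists p].
    have [w [Rw Hw]] := IH Ad nBd Bz.
    exists w; split=> //; apply: R_trans Rw; right.
    apply: (rpath_one (u:=u)) => //; last by exists j1.
    split; first by case: G.
    move=> p; split; [by case: G => _; apply|by move=> H; apply: Hn; exists p].
Qed.

End S2.

Section S3.
Variables (L : language) (M : structure L) (r : nat).
Hypothesis Hr : forall i : 'I_(nrel L), arity i <= r.
Hypothesis Hr2 : 2 <= r.

Lemma grow (D : M -> Prop) y : D y -> (forall a b, D a -> D b -> R D a b) -> infinite_set D ->
  forall n, 1 <= n -> exists S : list M, List.NoDup S /\ (forall x, List.In x S -> D x) /\
   (forall a b, List.In a S -> List.In b S -> R (fun x => List.In x S) a b) /\
   n <= List.length S <= n + r - 2.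
Proof.
move=> Dy Dc Dinf; elim=> [//|n IH] _.
case: (eqVneq n 0) => [->|n0].
  exists [:: y]; split; first by constructor; [case|constructor].
  split; first by move=> x [<-|[]].
  split; first by move=> a b [<-|[]] [<-|[]]; left.
  rewrite /=; lia.
have [S [nd [SD [Sc Hl]]]] : exists S : list M, List.NoDup S /\ (forall x, List.In x S -> D x) /\
   (forall a b, List.In a S -> List.In b S -> R (fun x => List.In x S) a b) /\
   n <= List.length S <= n + r - 2 by apply: IH; rewrite lt0n.
case: (leqP n.+1 (List.length S)) => Hs.
  exists S; do 3 (split=> //); lia.
have len : List.length S = n by lia.
have [z [Dz nSz]] : exists z, D z /\ ~ List.In z S.
  apply: NNPP => H; apply: Dinf; exists S => x Dx; apply: NNPP => nx; apply: H; by exists x.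
have [s sS] : exists s, List.In s S.
  destruct S as [|s S0]; [simpl in len; lia|by exists s; left].
have Rsz : rpath D s z.
  case: (Dc s z (SD s sS) Dz) => // E; by rewrite E in sS.
have [u [Gu [[j1 Hj1] [j2 Hj2]]]] := exitS (S := fun x => List.In x S) Rsz sS nSz.
set l := List.map (projT2 u) (enum 'I_(arity (projT1 u))).
have Inl : forall j, List.In (projT2 u j) l by move=> j; apply: List.in_map; apply: In_enum.
have ll : List.length l <= r by rewrite /l List.length_map length_size size_enum_ord; apply: Hr.
have [S' [nd' [H1 [H2 H3]]]] := union_ex l nd.
have H3' := H3 (ex_intro _ (projT2 u j1) (conj (Inl j1) Hj1)).
have low : List.length (projT2 u j2 :: S) <= List.length S'.
  apply/leP; apply: List.NoDup_incl_length; first by constructor.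
  move=> x [<-|Hx]; apply/H1; [right; exact: Inl|by left].
simpl in low.
exists S'; split=> //; split.
  move=> x /H1 [/SD //|].
  rewrite /l => /List.in_map_iff [j [<- _]]; exact: (proj2 Gu j).
split; last lia.
have toS0 : forall a, List.In a S' -> R (fun x => List.In x S') a (projT2 u j1).
  move=> a /H1 [aS|].
  - case: (Sc a _ aS Hj1) => [->|P]; [by left|right; apply: rpath_mono P; move=> x Hx; apply/H1; left; exact: Hx].
  - rewrite /l => /List.in_map_iff [j [<- _]]; right; apply: (rpath_one (u:=u)); last by exists j1.
      split; [exact: proj1 Gu|move=> p; apply/H1; right; exact: Inl].
    by exists j.
move=> a b aS bS; exact: R_trans (toS0 a aS) (R_sym (toS0 b bS)).
Qed.

Variables (k : nat) (C : M -> Prop).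
Hypothesis Htb : totally_bounded M k.
Hypothesis HC : component (fun _ => True) C.
Hypothesis Cinf : infinite_set C.

Lemma piece (t : nat) (t1 : 1 <= t) (B : list M) : exists P, List.NoDup P /\
  (forall x, List.In x P -> ~ List.In x B) /\
  (forall a b, List.In a P -> List.In b P -> a <> b -> rpath (fun x => List.In x P) a b) /\
  t <= List.length P <= t + r - 2.
Proof.
case: HC => [_ [[c0 Cc0] [Cconn Cclos]]].
set CB := fun x => C x /\ ~ List.In x B.
have [y [CBy Dinf]] : exists y, CB y /\ infinite_set (R CB y).
  apply: NNPP => H.
  have fin : forall w, CB w -> exists l, forall x, R CB w x -> List.In x l.
    move=> w CBw; apply: NNPP => Hn; apply: H; exists w; split=> // [[l Hl]]; apply: Hn; by exists l.
  have [NB HNB] := nbl Htb B.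
  case: (classic (exists b, List.In b B /\ C b)) => [[b0 [Bb0 Cb0]]|nob].
  - have [w _|Lc HLc] := @collect _ _ NB (fun w x => CB w /\ R CB w x).
      case: (classic (CB w)) => CBw.
      + have [l Hl] := fin w CBw; exists l => x [_ Hx]; exact: Hl.
      + by exists [::] => x [].
    apply: Cinf; exists (B ++ Lc) => c Cc; apply: List.in_or_app.
    case: (classic (List.In c B)) => cB; [by left|right].
    have ne : c <> b0 by move=> E; subst.
    have [w [Rw [NBw [Cw nBw]]]] := exitB HNB (Cconn c b0 Cc Cb0 ne) Cc cB Bb0.
    apply: (HLc w c NBw); split; [done|exact: R_sym].
  - have [l Hl] := fin c0 (conj Cc0 (fun H0 => nob (ex_intro _ c0 (conj H0 Cc0)))).
    apply: Cinf; exists l => c Cc; apply: Hl.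
    case: (classic (c0 = c)) => E; [by left|right].
    apply: rpath_mono (Cconn c0 c Cc0 Cc E) => x Cx; split=> // H0; apply: nob; by exists x.
set D := R CB y.
have DCB : forall x, D x -> CB x by move=> x [<-|P]; [done|exact: (rpath_ends P).2].
have Dc : forall a b, D a -> D b -> R D a b.
  have Hy : forall a, D a -> R D y a.
    move=> a [<-|P]; [by left|right; apply: rpath_in_reach P _; by left].
  move=> a b Da Db; exact: R_trans (R_sym (Hy a Da)) (Hy b Db).
have [S [nd [SD [Sc Hl]]]] := grow (or_introl erefl : D y) Dc Dinf t1.
exists S; split=> //; split; first by move=> x /SD /DCB [].
split=> // a b aS bS ne; by case: (Sc a b aS bS).
Qed.

End S3.

Lemma pigeon (f : nat -> nat) (K : nat) : (forall n, f n <= K) ->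
  exists v, forall N, exists n, N <= n /\ f n = v.
Proof.
move=> HK; apply: NNPP => H.
have Hv : forall v, exists N, forall n, N <= n -> f n <> v.
  move=> v; apply: NNPP => H1; apply: H; exists v => N; apply: NNPP => H2; apply: H1.
  exists N => n Hn E; apply: H2; by exists n.
have : forall K', exists N, forall v, v <= K' -> forall n, N <= n -> f n <> v.
  elim=> [|K' [N HN]].
    have [N HN] := Hv 0; exists N => v; rewrite leqn0 => /eqP ->; exact: HN.
  have [N' HN'] := Hv K'.+1; exists (maxn N N') => v Hv' n Hn.
  case: (leqP v K') => Hl; first (apply: HN => //; lia).
  have -> : v = K'.+1 by lia.
  apply: HN'; lia.
move=> /(_ K) [N HN]; exact: (HN (f N) (HK N) N (leqnn N) erefl).
Qed.

Fixpoint itn (g : nat -> nat) (i : nat) := match i with 0 => g 0 | S i => g (itn g i).+1 end.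

Lemma itn_mono (g : nat -> nat) : (forall N, N <= g N) -> forall i j, i < j -> itn g i < itn g j.
Proof.
move=> Hg i; elim=> [//|j IH] Hij /=.
case: (eqVneq i j) => [->|ne]; first exact: Hg.
have := IH ltac:(lia); have := Hg (itn g j).+1; lia.
Qed.

Fixpoint iterl (X : Type) (c : list X) (g : list X -> list X) n :=
  match n with 0 => c | S n => iterl c g n ++ g (iterl c g n) end.

Lemma iterl_mono (X : Type) (c : list X) g m n x : m <= n -> List.In x (iterl c g m) -> List.In x (iterl c g n).
Proof.
move=> Hmn; elim: n Hmn => [|n IH] Hmn.
  by have -> : m = 0 by lia.
case: (eqVneq m n.+1) => [->//|ne] Hx /=; apply: List.in_or_app; left; apply: IH => //; lia.
Qed.

Unset Implicit Arguments.
Theorem mainTheorem10 (L : language) (M : structure L) (k t r : nat) :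
  1 <= k -> 1 <= t -> 2 <= r -> max_arity L r ->
  totally_bounded M k ->
  (exists C : M -> Prop, component (fun _ => True) C /\ infinite_set C) ->
  exists (t' : nat) (A : M -> Prop),
    t <= t' <= t * r /\ substructure A /\ inf_many_components_of_size A t'.
Proof.
move=> k1 t1 r2 [_ Hr] Htb [C [HC Cinf]].
pose consts := List.map (cst M) (enum 'I_(ncst L)).
have pc := piece Hr r2 Htb HC Cinf t1.
pose pf := fun B => proj1_sig (constructive_indefinite_description _ (pc B)).
have pfS : forall B, let P := pf B in List.NoDup P /\
  (forall x, List.In x P -> ~ List.In x B) /\
  (forall a b, List.In a P -> List.In b P -> a <> b -> rpath (fun x => List.In x P) a b) /\
  t <= List.length P <= t + r - 2.
  move=> B; exact: (proj2_sig (constructive_indefinite_description _ (pc B))).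
pose nbf := fun B => proj1_sig (constructive_indefinite_description _ (nbl Htb B)).
have nbS : forall B b (u : tup M), List.In b B -> Defs.rel (projT2 u) ->
  occurs b u -> forall p, List.In (projT2 u p) (nbf B).
  move=> B; exact: (proj2_sig (constructive_indefinite_description _ (nbl Htb B))).
pose g := fun B => pf (B ++ nbf B).
pose prev := iterl consts g.
pose pc_ := fun n => g (prev n).
have pin : forall m n x, m < n -> List.In x (pc_ m) -> List.In x (prev n).
  move=> m n x Hmn Hx; apply: (@iterl_mono _ _ _ m.+1) => //=.
  apply: List.in_or_app; by right.
have avoid : forall n x, List.In x (pc_ n) -> ~ List.In x (prev n) /\ ~ List.In x (nbf (prev n)).
  move=> n x Hx; have [_ [H _]] := pfS (prev n ++ nbf (prev n)).
  have := H x Hx => H'; split=> H1; apply: H'; apply: List.in_or_app; by [left|right].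
pose A := fun x => List.In x consts \/ exists m, List.In x (pc_ m).
have sep : forall n (u : tup M) a, good A u -> occurs a u -> List.In a (pc_ n) ->
    forall p, List.In (projT2 u p) (pc_ n).
  move=> n u a [Hru HAu] [ja Ea] Ha p.
  have bad : forall B w, List.In w B -> occurs w u -> List.In a (nbf B).
    move=> B w Hw ow; rewrite -Ea; exact: nbS Hw Hru ow ja.
  have ow : occurs (projT2 u p) u by exists p.
  case: (HAu p) => [Hc|[m Hm]].
    have Hc' : List.In (projT2 u p) (prev n) by apply: (@iterl_mono _ _ _ 0) => //.
    by case: (avoid n a Ha) => _ []; apply: bad Hc' ow.
  case: (ltngtP m n) => Hmn.
  - by case: (avoid n a Ha) => _ []; apply: bad (pin _ _ _ Hmn Hm) ow.
  - case: (avoid m _ Hm) => _ []; exact: (nbS _ _ u (pin _ _ _ Hmn Ha) Hru (ex_intro _ ja Ea) p).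
  - by rewrite -Hmn.
have comp : forall n, component A (fun x => List.In x (pc_ n)).
  move=> n; have [nd [_ [conn len]]] := pfS (prev n ++ nbf (prev n)).
  split; first by move=> x Hx; right; exists n.
  split.
    case E : (pc_ n) => [|x l]; last by exists x; left.
    move: len; rewrite /pc_ /g in E; rewrite E /=; lia.
  split; first exact: conn.
  move=> a b Ha H; elim: H Ha => [u x z G ox [j <-] | u x c z G ox [j Ec] _ IH] Hx.
  - exact: sep G ox Hx j.
  - apply: IH; rewrite -Ec; exact: sep G ox Hx j.
have disj : forall m n x, m <> n -> List.In x (pc_ m) -> ~ List.In x (pc_ n).
  move=> m n x ne Hm Hn; case: (ltngtP m n) => Hmn.
  - by case: (avoid n x Hn) => [] []; apply: pin Hmn Hm.
  - by case: (avoid m x Hm) => [] []; apply: pin Hmn Hn.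
  - by apply: ne.
pose f := fun n => List.length (pc_ n).
have fS : forall n, t <= f n <= t + r - 2.
  move=> n; have [_ [_ [_ len]]] := pfS (prev n ++ nbf (prev n)); exact: len.
have [v Hv] := pigeon (K := t + r - 2) (f := f) (fun n => proj2 (andP (fS n))).
pose gi := fun N => proj1_sig (constructive_indefinite_description _ (Hv N)).
have giS : forall N, N <= gi N /\ f (gi N) = v.
  move=> N; exact: (proj2_sig (constructive_indefinite_description _ (Hv N))).
have fv : forall i, f (itn gi i) = v by case=> [|i] /=; apply: (proj2 (giS _)).
have inj : forall i j, i <> j -> itn gi i <> itn gi j.
  move=> i j ne; have mono := itn_mono (fun N => proj1 (giS N)).
  case: (ltngtP i j) => Hij; [have := mono _ _ Hij|have := mono _ _ Hij|done]; lia.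
exists v, A; split.
  have := fS (itn gi 0); rewrite fv => H; apply/andP; split; first lia.
  have : t + r - 2 <= t * r by nia.
  lia.
split.
  move=> c; left; apply: List.in_map; exact: In_enum.
move=> N; exists (fun m : 'I_N => fun x => List.In x (pc_ (itn gi m))); split.
  move=> m; split; first exact: comp.
  have [nd _] := pfS (prev (itn gi m) ++ nbf (prev (itn gi m))).
  exists (pc_ (itn gi m)); split; first exact: nd.
  split; first exact: fv.
  done.
move=> m1 m2 ne E.
have ne' : itn gi m1 <> itn gi m2 by apply: inj => E'; apply: ne; apply: val_inj.
have [nd [_ [_ len]]] := pfS (prev (itn gi m1) ++ nbf (prev (itn gi m1))).
case E1 : (pc_ (itn gi m1)) => [|x l].
  move: len; rewrite /pc_ /g in E1; rewrite E1 /=; lia.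
have Hx : List.In x (pc_ (itn gi m1)) by rewrite E1; left.
exact: disj ne' Hx (proj1 (E x) Hx).
Qed.
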